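(* Let $m\geq 2$ be an integer and let $H$ be $\mathrm{Sym}(m)$ or $\mathrm{Alt}(m)$ acting on the set of $2$-element subsets of $\{1,\ldots,m\}$. If $H$ contains a permutation $g$ having at most four cycles in this action, then $m\leq 9$.
   Context: The number of cycles of a permutation is the number of orbits of the cyclic group it generates, fixed points included. *)

(* Defs.v *)
From mathcomp Require Import all_boot all_fingroup all_solvable alt.
Set Implicit Arguments. Unset Strict Implicit. Unset Printing Implicit Defensive.

Definition two_subsets (m : nat) : {set {set 'I_m}} :=
  [set A : {set 'I_m} | #|A| == 2].

(* Number of cycles of g acting on 2-subsets (A |-> g @: A): the number of
   orbits of the cyclic group <[g]> on the 2-subsets, fixed points included. *)
Definition pair_cycles (m : nat) (g : {perm 'I_m}) : nat :=
  #|[set orbit ('P^*)%act <[g]> A | A in two_subsets m]|.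

(* Main.v *)
Require Import Defs.
From mathcomp Require Import all_boot all_fingroup all_solvable alt.
From mathcomp Require Import zify.

Set Implicit Arguments. Unset Strict Implicit. Unset Printing Implicit Defensive.
Import GroupScope.

Section Count.
Variables (T : finType) (s : {perm T}).

Definition rep (z : T) : T := odflt z [pick y in porbit s z].

Lemma rep_in z : rep z \in porbit s z.
Proof.
rewrite /rep; case: pickP => [y Hy|H] //=; exact: porbit_id.
Qed.

Lemma rep_eq z z' : z' \in porbit s z -> rep z' = rep z.
Proof.
move=> H; have E : porbit s z' = porbit s z by apply/eqP; rewrite eq_porbit_mem.
rewrite /rep E; case: pickP => [y Hy|H0] //=.
by have := H0 z; rewrite porbit_id.
Qed.

Lemma porbit_rep z : porbit s (rep z) = porbit s z.
Proof. by apply/eqP; rewrite eq_porbit_mem rep_in. Qed.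

Lemma act_porbit a x : a \in <[s]> -> a x \in porbit s x.
Proof. by case/cycleP=> j ->; apply: mem_porbit. Qed.

Lemma powC i j x : (s ^+ j) ((s ^+ i) x) = (s ^+ i) ((s ^+ j) x).
Proof. by rewrite -!permM -!expgD addnC. Qed.

Lemma actC a i x : a \in <[s]> -> a ((s ^+ i) x) = (s ^+ i) (a x).
Proof. by case/cycleP=> j ->; apply: powC. Qed.

Definition Om := [set orbit ('P^*)%act <[s]> A | A in [set A : {set T} | #|A| == 2]].

Lemma orb_eq (A B : {set T}) :
  orbit ('P^*)%act <[s]> A = orbit ('P^*)%act <[s]> B ->
  exists2 a, a \in <[s]> & [set a x | x in B] = A.
Proof.
move=> E; have : A \in orbit ('P^*)%act <[s]> B by rewrite -E orbit_refl.
case/orbitP=> a Ha <-; exists a => //; by rewrite /= setactE.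
Qed.

Lemma bin2_mul k : ('C(k, 2) * 2 = k * k.-1)%N.
Proof.
elim: k => [//|k IH]; rewrite binS bin1 mulnDl IH /=; case: k {IH} => //= k; lia.
Qed.

Lemma count_bound : (#|T| + #|[set z | rep z == z]| ^ 2 <=
   2 * #|Om| + 2 * #|[set z | rep z == z]|)%N.
Proof.
set R := [set z | rep z == z]; set D := ~: R.
set phi := fun z => orbit ('P^*)%act <[s]> [set rep z; z].
set psi := fun B : {set T} => orbit ('P^*)%act <[s]> B.
set E := [set B : {set T} | B \subset R & #|B| == 2].
have inR y : (y \in R) = (rep y == y) by rewrite inE.
have inD y : (y \in D) = (rep y != y) by rewrite !inE.
have S1 : #|D| <= #|phi @: D| * 2.
  rewrite -sum1_card (partition_big_imset phi) /= -sum_nat_const.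
  apply: leq_sum => o /imsetP[z0 Hz0 ->].
  rewrite sum1dep_card.
  have := rep_in z0; rewrite porbit_sym => /porbitP[i Hi].
  set r := rep z0 in Hi.
  apply: (@leq_trans #|[set z0; (s ^+ i)^-1 r]|); last by rewrite cards2; case: eqP.
  apply: subset_leq_card; apply/subsetP => z; rewrite !inE => /andP[zD /eqP Ephi].
  case: (orb_eq Ephi) => a Ha; rewrite imsetU !imset_set1 => Eset.
  have zin : z \in [set a (rep z0); a z0] by rewrite Eset !inE eqxx orbT.
  have rzin : rep z \in [set a (rep z0); a z0] by rewrite Eset !inE eqxx.
  have zorb : z \in porbit s z0.
    move: zin; rewrite !inE => /orP[] /eqP ->.
      by rewrite -porbit_rep; exact: act_porbit.
    exact: act_porbit.
  have rz : rep z = r by exact: rep_eq.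
  rewrite rz in rzin; move: zD; rewrite ?inE rz => zD.
  move: rzin zin; rewrite !inE => /orP[] /eqP Hr /orP[] /eqP Hz.
  - by rewrite Hz -Hr eqxx in zD.
  - by rewrite Hz Hi actC // -Hr eqxx.
  - by rewrite Hr Hi actC // -Hz permK eqxx orbT.
  - by rewrite Hz -Hr eqxx in zD.
have S2 : {in E &, injective psi}.
  move=> B B'; rewrite !inE => /andP[BR /eqP cB] /andP[B'R /eqP cB'] Epsi.
  case: (orb_eq Epsi) => a Ha HB.
  apply/eqP; rewrite eqEcard cB cB' leqnn andbT -HB.
  apply/subsetP => _ /imsetP[x xB' ->].
  have xR : x \in R := subsetP B'R x xB'.
  have axR : a x \in R by apply: (subsetP BR); rewrite -HB; apply: imset_f.
  move: xR axR; rewrite !inE (rep_eq (act_porbit x Ha)) => /eqP xR /eqP axR.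
  by rewrite -axR xR.
have S3 : phi @: D :&: psi @: E = set0.
  apply/setP => o; rewrite !inE; apply/negbTE/negP => /andP[/imsetP[z zD ->] /imsetP[B BE EB]].
  case: (orb_eq (esym EB)) => a Ha; rewrite imsetU !imset_set1 => HB.
  move: BE; rewrite inE => /andP[BR _].
  have h1 : a (rep z) \in R by apply: (subsetP BR); rewrite -HB !inE eqxx.
  have h2 : a z \in R by apply: (subsetP BR); rewrite -HB !inE eqxx orbT.
  move: h1 h2; rewrite !inE (rep_eq (act_porbit _ Ha)) (rep_eq (act_porbit _ Ha)).
  rewrite (rep_eq (rep_in z)) => /eqP h1 /eqP h2.
  move: zD; rewrite !inE => /eqP; apply; apply: (@perm_inj _ a); by rewrite -h1 -h2.
have cE : #|psi @: E| = 'C(#|R|, 2) by rewrite card_in_imset // cards_draws.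
have cD : #|R| + #|D| = #|T| := cardsC R.
have sub : phi @: D :|: psi @: E \subset Om.
  apply/subsetP => o; rewrite inE => /orP[] /imsetP[x Hx ->]; apply: imset_f; rewrite inE.
  - by rewrite cards2; move: Hx; rewrite !inE => ->.
  - by move: Hx; rewrite inE => /andP[_ ->].
have := subset_leq_card sub.
have := cardsUI (phi @: D) (psi @: E); rewrite S3 cards0 addn0 => U.
have := bin2_mul #|R|.
move: S1 U cE cD; set k := #|R|; case: k => [|k] /=; nia.
Qed.

End Count.

Theorem lemma3p3 (m : nat) (H : {set {perm 'I_m}}) (g : {perm 'I_m}) :
  2 <= m ->
  (H = Sym 'I_m \/ H = Alt 'I_m) ->
  g \in H ->
  pair_cycles g <= 4 ->
  m <= 9.
Proof.
move=> _ _ _ Hg.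
have := count_bound g; rewrite card_ord.
change #|Om g| with (pair_cycles g).
set k := #|_|; move: Hg; set N := pair_cycles g => Hg B.
nia.
Qed.
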